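(* Let $X$ be a topological space, $Y$ a $T_1$ topological space, $\pi: X \to Y$ a continuous surjection, and $y \in Y$. Let $Y^y$ be the quotient space of $X$ obtained by identifying each fiber $\pi^{-1}(y')$ with $y' \neq y$ to a single point while leaving every point of $\pi^{-1}(y)$ as its own class, let $p^y: X \to Y^y$ be the quotient map, and let $\pi^y: Y^y \to Y$ be the unique map with $\pi = \pi^y \circ p^y$. Then the restriction $p^y|_{\pi^{-1}(y)}: \pi^{-1}(y) \to (\pi^y)^{-1}(y)$ is a homeomorphism (with the subspace topologies from $X$ and $Y^y$ respectively). *)

(* Defs.v *)
From HB Require Import structures.
From mathcomp Require Import all_boot all_order all_algebra.
From mathcomp Require Import all_classical all_reals all_analysis.
From mathcomp Require Import generic_quotient.

Set Implicit Arguments.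
Unset Strict Implicit.
Unset Printing Implicit Defensive.

Local Open Scope classical_set_scope.
Local Open Scope quotient_scope.

Definition homeomorphism {A B : topologicalType} (f : A -> B) : Prop :=
  exists g : B -> A, [/\ cancel f g, cancel g f, continuous f & continuous g].

(* The equivalence relation on X whose classes are the fibers pi^-1(y')
   for y' <> y, and the singletons {x} for x in pi^-1(y). *)
Definition fiber_relb {X Y : topologicalType} (pi : X -> Y) (y : Y) : rel X :=
  fun x1 x2 => (x1 == x2) || ((pi x1 == pi x2) && (pi x1 != y)).

Lemma fiber_relb_equiv {X Y : topologicalType} (pi : X -> Y) (y : Y) :
  equiv_class_of (fiber_relb pi y).
Proof.
split.
- by move=> x; rewrite /fiber_relb eqxx.
- move=> a b; rewrite /fiber_relb eq_sym; congr (_ || _).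
  by case: (eqVneq (pi a) (pi b)) => [->|]; rewrite ?andbF // eq_sym.
- move=> b a c; rewrite /fiber_relb.
  case/orP => [/eqP -> //|/andP[/eqP ab ay]].
  case/orP => [/eqP <-|/andP[/eqP bc by_]].
    by rewrite ab eqxx -ab ay orbT.
  by rewrite ab bc eqxx -bc -ab (negbTE ay) orbT.
Qed.

Definition fiber_rel {X Y : topologicalType} (pi : X -> Y) (y : Y) :
  equiv_rel X := EquivRelPack (fiber_relb_equiv pi y).

Notation Yy f z := (quotient_topology {eq_quot (fiber_rel f z)}).

Definition py {X Y : topologicalType} (pi : X -> Y) (y : Y) : X -> Yy pi y :=
  \pi_(Yy pi y).

Definition piy {X Y : topologicalType} (pi : X -> Y) (y : Y) : Yy pi y -> Y :=
  fun q => pi (repr q).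
Arguments piy {X Y} pi y q.
Arguments py {X Y} pi y x.

Lemma piyK {X Y : topologicalType} (pi : X -> Y) (y : Y) (x : X) :
  piy pi y (py pi y x) = pi x.
Proof.
rewrite /piy /py.
have : fiber_relb pi y (repr (\pi_(Yy pi y) x)) x.
  change (fiber_rel pi y (repr (\pi_(Yy pi y) x)) x).
  by apply/eqmodP; rewrite reprK.
by rewrite /fiber_relb => /orP[/eqP -> //|/andP[/eqP -> _]].
Qed.

Definition py_restr {X Y : topologicalType} (pi : X -> Y) (y : Y)
  (x : set_type (pi @^-1` [set y])) : set_type (piy pi y @^-1` [set y]) :=
  exist _ (py pi y (val x))
    (mem_set (etrans (piyK pi y (val x)) (set_mem (valP x)))).
Arguments py_restr {X Y} pi y x.

(* Main.v *)
Require Import Defs.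
From HB Require Import structures.
From mathcomp Require Import all_boot all_order all_algebra.
From mathcomp Require Import all_classical all_reals all_analysis.
From mathcomp Require Import generic_quotient.

Local Open Scope classical_set_scope.
Local Open Scope quotient_scope.

Section S.
Context (X Y : topologicalType) (pi : X -> Y) (y : Y).

Lemma repr_py (x : X) : pi x = y -> repr (py pi y x) = x.
Proof.
move=> pxy.
have : fiber_relb pi y (repr (py pi y x)) x.
  change (fiber_rel pi y (repr (\pi_(Yy pi y) x)) x).
  by apply/eqmodP; rewrite reprK.
rewrite /fiber_relb => /orP[/eqP -> //|/andP[/eqP e]].
by rewrite e pxy eqxx.
Qed.

Definition ginv (q : set_type (piy pi y @^-1` [set y])) : set_type (pi @^-1` [set y]) :=
  exist _ (repr (val q)) (valP q).

End S.

Theorem proposition4p1 (X Y : topologicalType) (pi : X -> Y) (y : Y) :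
  accessible_space Y -> continuous pi -> (forall y' : Y, exists x : X, pi x = y') ->
  homeomorphism (py_restr pi y).
Proof.
move=> T1 cpi _.
exists (@ginv X Y pi y); split.
- move=> [x hx]; apply: eq_sig_hprop => [*|/=]; first exact: Prop_irrelevance.
  rewrite /py_restr /ginv /=. exact: (@repr_py X Y pi y x (set_mem hx)).
- move=> [q hq]; apply: eq_sig_hprop => [*|/=]; first exact: Prop_irrelevance.
  by rewrite /py reprK.
- apply/continuousP => A [W oW <-].
  exists (py pi y @^-1` W); first exact: oW.
  by [].
- apply/continuousP => A [U oU <-].
  have cly : closed [set y] by exact: accessible_closed_set1.
  pose V := U `|` pi @^-1` (~` [set y]).
  have oV : open V.
    apply: openU => //; apply: ((continuousP _).1 cpi); exact: closed_openC.
  exists (py pi y @` V).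
  - rewrite /open /= /quotient_open.
    suff -> : \pi_(Yy pi y) @^-1` (py pi y @` V) = V by [].
    rewrite eqEsubset; split => [x' [v Vv e]|x' Vx']; last by exists x'.
    have : fiber_relb pi y x' v.
      change (fiber_rel pi y x' v); apply/eqmodP; exact: esym.
    rewrite /fiber_relb => /orP[/eqP -> //|/andP[/eqP e1 /eqP e2]].
    by right.
  - rewrite eqEsubset; split => [[q hq] /= [v Vv e]|[q hq] /= Uq].
      have e' : py pi y v = q by exact: e.
      have pv : pi v = y.
        by rewrite -(piyK pi y v) e'; exact: (set_mem hq).
      case: Vv => [Uv|//].
      change (U (repr q)); rewrite -e' repr_py //.
    by exists (repr q); [left|rewrite /py reprK].
Qed.
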